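(* Let $N\ge 1$ and let $-\infty<a_i\le b_i<\infty$ for $i=1,\dots,N$, with $r_i=(b_i-a_i)/2>0$ for all $i$. Let $\Theta=\prod_{i=1}^N[a_i,b_i]$ and $T(y)=\sum_{i=1}^N y_i$. Let $p$ be a sampling design on subsets of $\{1,\dots,N\}$ with inclusion probabilities $\pi_i=\mathbb P_p(i\in S)>0$ for all $i$. Then for any unbiased estimator $\delta$, \[ \sup_{y\in\Theta}R(\delta,p;y)\;\ge\;\sum_{i=1}^N r_i^2\,\frac{1-\pi_i}{\pi_i}. \]
   Context: A sampling design is a probability distribution $p$ on the subsets $s\subseteq\{1,\dots,N\}$; $S$ denotes the random sample drawn from $p$, $\mathbb P_p$ and $\mathbb E_p$ denote probability and expectation with respect to $p$. An estimator $\delta$ is a collection of measurable functions $\delta_s:\Theta_s\to\mathbb R$, one for each subset $s$, where $\Theta_s=\prod_{i\in s}[a_i,b_i]$ is the projection of $\Theta$ onto the coordinates in $s$; for $y\in\Theta$ write $y_s=(y_i)_{i\in s}$. The estimator is unbiased (for design $p$) if $\mathbb E_p[\delta_S(y_S)]=T(y)$ for all $y\in\Theta$. The risk is $R(\delta,p;y)=\mathbb E_p[(\delta_S(y_S)-T(y))^2]$. *)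

(* Defs.v *)
From HB Require Import structures.
From mathcomp Require Import all_boot all_order all_algebra.
From mathcomp Require Import classical_sets reals ereal.
Set Implicit Arguments. Unset Strict Implicit. Unset Printing Implicit Defensive.
Import Order.TTheory GRing.Theory Num.Theory.
Local Open Scope ring_scope.

Section Sampling.
Variables (R : realType) (N : nat).

Definition is_design (p : {ffun {set 'I_N} -> R}) : Prop :=
  (forall s, 0 <= p s) /\ \sum_(s : {set 'I_N}) p s = 1.

Definition incl_prob (p : {ffun {set 'I_N} -> R}) (i : 'I_N) : R :=
  \sum_(s : {set 'I_N} | i \in s) p s.

Definition inTheta (a b : 'I_N -> R) (y : 'I_N -> R) : Prop :=
  forall i, a i <= y i <= b i.

Definition total (y : 'I_N -> R) : R := \sum_i y i.

(* An estimator: delta s is a function of y_s only, i.e. on Theta its value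
   depends only on the coordinates in s. *)
Definition is_estimator (a b : 'I_N -> R)
  (delta : {set 'I_N} -> ('I_N -> R) -> R) : Prop :=
  forall (s : {set 'I_N}) y z, inTheta a b y -> inTheta a b z ->
    (forall i, i \in s -> y i = z i) -> delta s y = delta s z.

Definition expect_est (p : {ffun {set 'I_N} -> R})
  (delta : {set 'I_N} -> ('I_N -> R) -> R) (y : 'I_N -> R) : R :=
  \sum_(s : {set 'I_N}) p s * delta s y.

Definition unbiased (a b : 'I_N -> R) (p : {ffun {set 'I_N} -> R})
  (delta : {set 'I_N} -> ('I_N -> R) -> R) : Prop :=
  forall y, inTheta a b y -> expect_est p delta y = total y.

Definition risk (p : {ffun {set 'I_N} -> R})
  (delta : {set 'I_N} -> ('I_N -> R) -> R) (y : 'I_N -> R) : R :=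
  \sum_(s : {set 'I_N}) p s * (delta s y - total y) ^+ 2.

End Sampling.

(* Main.v *)
Require Import Defs.
From HB Require Import structures.
From mathcomp Require Import all_boot all_order all_algebra.
From mathcomp Require Import classical_sets reals ereal.
From mathcomp Require Import ring lra.
From Stdlib Require Classical_Prop.
Import Order.TTheory GRing.Theory Num.Theory.
Set Implicit Arguments. Unset Strict Implicit.
Local Open Scope ring_scope.
Definition sgn (R : realType) N (e : {ffun 'I_N -> bool}) (i : 'I_N) : R :=
  if e i then 1 else -1.

Definition flip N (i : 'I_N) (e : {ffun 'I_N -> bool}) : {ffun 'I_N -> bool} :=
  [ffun j => if j == i then ~~ e j else e j].

Lemma flipK N (i : 'I_N) : involutive (flip i).
Proof.
move=> e; apply/ffunP => j; rewrite !ffunE.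
by case: eqP => // ->; rewrite negbK.
Qed.

Lemma sgn_flip (R : realType) N (i : 'I_N) e : sgn R (flip i e) i = - sgn R e i.
Proof. by rewrite /sgn ffunE eqxx; case: (e i); rewrite ?opprK. Qed.

Lemma sgn_flip_ne (R : realType) N (i j : 'I_N) e : j != i -> sgn R (flip i e) j = sgn R e j.
Proof. by move=> /negbTE H; rewrite /sgn ffunE H. Qed.

Lemma flip_sum (R : realType) N (i : 'I_N) (f : {ffun 'I_N -> bool} -> R) :
  (forall e, f (flip i e) = f e) -> \sum_e sgn R e i * f e = 0.
Proof.
move=> Hf.
set X := \sum_e _.
have : X = - X.
  rewrite {1}/X (reindex_inj (can_inj (flipK i))) /X -sumrN.
  by apply: eq_bigr => e _; rewrite sgn_flip Hf mulNr.
move=> H; lra.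
Qed.

Lemma sgn_sq (R : realType) N (e : {ffun 'I_N -> bool}) i : sgn R e i * sgn R e i = 1.
Proof. by rewrite /sgn; case: (e i); rewrite ?mulN1r ?opprK ?mul1r. Qed.

Lemma sum_sgn2 (R : realType) N (i j : 'I_N) :
  \sum_e sgn R e i * sgn R e j = (#|{ffun 'I_N -> bool}|%:R) * (i == j)%:R.
Proof.
case: eqP => [<-|/eqP ne].
  under eq_bigr => e _ do rewrite sgn_sq.
  by rewrite sumr_const mulr1; congr (_%:R); apply: eq_card.
rewrite (_ : false%:R = 0 :> R) // mulr0; apply: flip_sum => e; by rewrite sgn_flip_ne // eq_sym.
Qed.

Lemma sum_sgn_const (R : realType) N (i : 'I_N) (c : R) :
  \sum_e sgn R e i * c = 0.
Proof. by apply: flip_sum. Qed.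
Lemma sum_kron (R : realType) N (i : 'I_N) (F : 'I_N -> R) :
  \sum_j (i == j)%:R * F j = F i.
Proof.
rewrite (bigD1 i) //= eqxx mul1r big1 ?addr0 // => j /negbTE.
by rewrite eq_sym => ->; rewrite mul0r.
Qed.

Lemma sq_sum (R : realType) N (u : 'I_N -> R) :
  \sum_e (\sum_i sgn R e i * u i) ^+ 2 =
  #|{ffun 'I_N -> bool}|%:R * \sum_i u i ^+ 2.
Proof.
under eq_bigr => e _ do rewrite expr2 mulr_suml.
under eq_bigr => e _ do under eq_bigr => i _ do rewrite mulr_sumr.
rewrite exchange_big /= mulr_sumr; apply: eq_bigr => i _.
rewrite exchange_big /=.
under eq_bigr => j _ do under eq_bigr => e _ do rewrite mulrACA.
under eq_bigr => j _ do rewrite -mulr_suml sum_sgn2 -mulrA.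
by rewrite -mulr_sumr sum_kron expr2.
Qed.

Unset Implicit Arguments.
Local Open Scope classical_set_scope.

Theorem theorem1 (R : realType) (N : nat) (a b : 'I_N -> R)
  (p : {ffun {set 'I_N} -> R}) (delta : {set 'I_N} -> ('I_N -> R) -> R) :
  (1 <= N)%N ->
  (forall i, 0 < (b i - a i) / 2) ->
  is_design p ->
  (forall i, 0 < incl_prob p i) ->
  is_estimator a b delta ->
  unbiased a b p delta ->
  ((\sum_i ((b i - a i) / 2) ^+ 2 * ((1 - incl_prob p i) / incl_prob p i))%:E
     <= ereal_sup [set (risk p delta y)%:E | y in [set y | inTheta a b y]])%E.
Proof.
move=> _ rpos [p0 p1] pipos est unb.
pose c i := (a i + b i) / 2.
pose r i := (b i - a i) / 2.
pose y (e : {ffun 'I_N -> bool}) : 'I_N -> R := fun i => c i + sgn R e i * r i.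
have yT e : inTheta a b (y e).
  move=> i; have := rpos i; rewrite /y /c /r /sgn; case: (e i) => /= ri; apply/andP; split; lra.
pose pi := incl_prob p.
pose w (s : {set 'I_N}) i : R := (i \in s)%:R / pi i - 1.
pose D s e := delta s (y e) - Defs.total (y e).
pose h s e := \sum_i sgn R e i * (r i * w s i).
pose M : R := #|{ffun 'I_N -> bool}|%:R.
pose V := \sum_i r i ^+ 2 * ((1 - pi i) / pi i).
pose G s i := \sum_e sgn R e i * delta s (y e).
have G0 (s : {set 'I_N}) (i : 'I_N) : i \notin s -> G s i = 0.
  move=> nis; apply: flip_sum => e; apply: est; rewrite ?yT // => j js.
  rewrite /y sgn_flip_ne //; apply/eqP => ji; move: nis; by rewrite -ji js.
have Tot i : \sum_e sgn R e i * Defs.total (y e) = M * r i.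
  rewrite /Defs.total; under eq_bigr => e _ do rewrite mulr_sumr.
  rewrite exchange_big /=.
  under eq_bigr => j _ do (under eq_bigr => e _ do rewrite mulrDr mulrA;
     rewrite big_split /= sum_sgn_const -mulr_suml sum_sgn2 add0r -mulrA).
  by rewrite -mulr_sumr sum_kron.
have Gsum i : \sum_s p s * G s i = M * r i.
  rewrite -Tot; under eq_bigr => s _ do rewrite mulr_sumr.
  rewrite exchange_big /=; apply: eq_bigr => e _.
  rewrite -(unb _ (yT e)) /expect_est mulr_sumr; apply: eq_bigr => s _.
  by rewrite mulrCA.
have Ind i : \sum_s p s * (i \in s)%:R = pi i.
  rewrite /pi /incl_prob [RHS]big_mkcond; apply: eq_bigr => s _.
  by case: (i \in s); rewrite ?mulr1 ?mulr0.
have GInd i : \sum_s p s * (i \in s)%:R * G s i = M * r i.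
  rewrite -Gsum; apply: eq_bigr => s _.
  by case: (boolP (i \in s)) => [_|/G0 ->]; rewrite ?mulr1 ?mulr0.
have F s i : \sum_e sgn R e i * D s e = G s i - M * r i.
  by rewrite /D; under eq_bigr => e _ do rewrite mulrBr; rewrite sumrB Tot.
have S1 : \sum_e \sum_s p s * (D s e * h s e) = M * V.
  under eq_bigr => e _ do under eq_bigr => s _ do rewrite /h mulr_sumr mulr_sumr.
  rewrite exchange_big /=.
  under eq_bigr => s _ do rewrite exchange_big /=.
  rewrite exchange_big /= /V mulr_sumr; apply: eq_bigr => i _.
  transitivity (\sum_s (r i * p s * w s i) * (G s i - M * r i)).
    apply: eq_bigr => s _; rewrite -F mulr_sumr; apply: eq_bigr => e _; ring.
  transitivity (r i * \sum_s ((p s * (i \in s)%:R * G s i) / pi i - p s * G s i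
      - (M * r i / pi i) * (p s * (i \in s)%:R) + (M * r i) * p s)).
    rewrite mulr_sumr; apply: eq_bigr => s _; rewrite /w; field.
    exact: lt0r_neq0.
  rewrite big_split /= !sumrB -mulr_suml -!mulr_sumr GInd Gsum Ind p1.
  rewrite /pi; field; exact: lt0r_neq0.
have S2 : \sum_e \sum_s p s * h s e ^+ 2 = M * V.
  rewrite exchange_big /=.
  under eq_bigr => s _ do rewrite -mulr_sumr /h sq_sum mulrCA mulr_sumr.
  rewrite -mulr_sumr exchange_big /=; congr (_ * _); apply: eq_bigr => i _.
  transitivity (\sum_(s : {set 'I_N}) ((r i ^+ 2 * ((pi i)^-1 ^+ 2 - 2 * (pi i)^-1)) * (p s * (i \in s)%:R) + r i ^+ 2 * p s)).
    apply: eq_bigr => s _; rewrite /w; case: (i \in s) => /=; field; exact: lt0r_neq0.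
  rewrite big_split /= -!mulr_sumr Ind p1 /pi; field; exact: lt0r_neq0.
have key : M * V <= \sum_e risk p delta (y e).
  have -> : M * V = 2 * (M * V) - M * V by ring.
  rewrite -{1}S1 -S2 mulr_sumr -sumrB; apply: ler_sum => e _.
  rewrite mulr_sumr -sumrB /risk; apply: ler_sum => s _.
  rewrite (_ : 2 * _ - _ = p s * (2 * (D s e * h s e) - h s e ^+ 2)); last by ring.
  apply: ler_wpM2l; first exact: p0.
  rewrite -subr_ge0 (_ : _ - _ = (D s e - h s e) ^+ 2); first exact: sqr_ge0.
  rewrite /D; ring.
have [e He] : exists e, V <= risk p delta (y e).
  apply: Classical_Prop.NNPP => H.
  have H' e : risk p delta (y e) < V.
    by rewrite ltNge; apply/negP => He; apply: H; exists e.
  have : \sum_e risk p delta (y e) < \sum_(e : {ffun 'I_N -> bool}) V.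
    apply: ltr_sum => [|e _]; last exact: H'.
    by apply/hasP; exists [ffun => true]; rewrite ?mem_index_enum.
  by rewrite sumr_const -mulr_natl -/M ltNge key.
apply: (@le_trans _ _ (risk p delta (y e))%:E); first by rewrite lee_fin.
apply: ereal_sup_ubound; exists (y e) => //; exact: yT.
Qed.
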